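(* Let $n\ge 2$, let $\gamma$ be an admissible Jordan arc, and let $f:\gamma\to\mathbb{C}$ be such that $f^{(n+1)}$ exists and is continuous on $\gamma$. Then for every $k=1,2,\dots,n-1$ and all $z_1\ne z_2$ in $\gamma$, \[ |d_1^{\,k}(f\,|\,z_1,z_2)|\le\frac{C_{\gamma,k}}{k+1}, \] where \[ C_{\gamma,k}=\sup_{z\in\gamma}|f^{(k+1)}(z)|+\sup_{z_1,z_2\in\gamma,\ z_1\ne z_2}\left|\frac{\int_{z_2}^{z_1}(z-z_2)^{k+1}f^{(k+2)}(z)\,dz}{(z_1-z_2)^{k+1}}\right| \] is finite and depends only on $f,\gamma,k$.
   Context: A Jordan arc is the image of $[0,1]$ under a homeomorphism into $\mathbb{C}$; it is admissible if it is the image of a parametrization $\phi\in C^1([0,1])$ with $\phi'(t)\ne0$ for all $t\in[0,1]$ (one-sided at endpoints). For $g$ on $\gamma$, $g'(z_1)=\lim_{z\to z_1,\,z\in\gamma}\frac{g(z)-g(z_1)}{z-z_1}$; higher derivatives $g^{(k)}$ are defined inductively. For $z_1=\phi(t_1),z_2=\phi(t_2)$, $\int_{z_2}^{z_1}g(z)\,dz:=\int_{t_2}^{t_1}g(\phi(t))\phi'(t)\,dt$. $d_1(f\,|\,z_1,z_2)=\frac{f(z_1)-f(z_2)}{z_1-z_2}$ and $d_1^{\,k}(f\,|\,z_1,z_2)$ is its $k$-th derivative along $\gamma$ with respect to $z_1$. *)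

(* Defs.v *)
From Stdlib Require Import Reals.
Open Scope R_scope.

Definition Cx : Type := (R * R)%type.
Definition Cx0 : Cx := (0, 0).
Definition RtoC (r : R) : Cx := (r, 0).
Definition Cadd (z w : Cx) : Cx := (fst z + fst w, snd z + snd w).
Definition Copp (z : Cx) : Cx := (- fst z, - snd z).
Definition Csub (z w : Cx) : Cx := Cadd z (Copp w).
Definition Cmul (z w : Cx) : Cx :=
  (fst z * fst w - snd z * snd w, fst z * snd w + snd z * fst w).
Definition Cinv (z : Cx) : Cx :=
  let d := fst z ^ 2 + snd z ^ 2 in (fst z / d, - snd z / d).
Definition Cdiv (z w : Cx) : Cx := Cmul z (Cinv w).
Fixpoint Cpow (z : Cx) (n : nat) : Cx :=
  match n with O => (1, 0) | S m => Cmul z (Cpow z m) end.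
Definition Cnorm (z : Cx) : R := sqrt (fst z ^ 2 + snd z ^ 2).

Definition param_deriv (phi dphi : R -> Cx) : Prop :=
  forall t, 0 <= t <= 1 -> forall eps, eps > 0 -> exists delta, delta > 0 /\
    forall s, 0 <= s <= 1 -> s <> t -> Rabs (s - t) < delta ->
      Cnorm (Csub (Cdiv (Csub (phi s) (phi t)) (RtoC (s - t))) (dphi t)) < eps.

Definition cont_on01 (g : R -> Cx) : Prop :=
  forall t, 0 <= t <= 1 -> forall eps, eps > 0 -> exists delta, delta > 0 /\
    forall s, 0 <= s <= 1 -> Rabs (s - t) < delta -> Cnorm (Csub (g s) (g t)) < eps.

(* phi is an admissible parametrization: Cx^1 on [0,1], phi' <> 0, injective on [0,1]
   (a continuous injection of [0,1] is a homeomorphism onto its image, so its image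
   is a Jordan arc). *)
Definition admissible_param (phi dphi : R -> Cx) : Prop :=
  param_deriv phi dphi /\ cont_on01 dphi /\
  (forall t, 0 <= t <= 1 -> dphi t <> Cx0) /\
  (forall s t, 0 <= s <= 1 -> 0 <= t <= 1 -> phi s = phi t -> s = t).

Definition on_arc (phi : R -> Cx) (z : Cx) : Prop := exists t, 0 <= t <= 1 /\ phi t = z.

Definition arc_deriv (G : Cx -> Prop) (g g1 : Cx -> Cx) (z1 : Cx) : Prop :=
  forall eps, eps > 0 -> exists delta, delta > 0 /\
    forall z, G z -> z <> z1 -> Cnorm (Csub z z1) < delta ->
      Cnorm (Csub (Cdiv (Csub (g z) (g z1)) (Csub z z1)) (g1 z1)) < eps.

Definition arc_cont (G : Cx -> Prop) (g : Cx -> Cx) : Prop :=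
  forall z1, G z1 -> forall eps, eps > 0 -> exists delta, delta > 0 /\
    forall z, G z -> Cnorm (Csub z z1) < delta -> Cnorm (Csub (g z) (g z1)) < eps.

Definition deriv_chain (G P : Cx -> Prop) (g : Cx -> Cx) (D : nat -> Cx -> Cx) (m : nat) : Prop :=
  (forall z, P z -> D O z = g z) /\
  (forall j, (j < m)%nat -> forall z, P z -> arc_deriv G (D j) (D (S j)) z).

(* v = \int_{z2}^{z1} g(z) dz := \int_{t2}^{t1} g(phi t) phi'(t) dt, z_i = phi(t_i) *)
Definition arc_integral (phi dphi : R -> Cx) (g : Cx -> Cx) (z2 z1 v : Cx) : Prop :=
  exists t1 t2, 0 <= t1 <= 1 /\ 0 <= t2 <= 1 /\ phi t1 = z1 /\ phi t2 = z2 /\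
  exists (pr1 : Riemann_integrable (fun t => fst (Cmul (g (phi t)) (dphi t))) t2 t1)
         (pr2 : Riemann_integrable (fun t => snd (Cmul (g (phi t)) (dphi t))) t2 t1),
    v = (RiemannInt pr1, RiemannInt pr2).

Definition divdiff (f : Cx -> Cx) (z2 : Cx) : Cx -> Cx :=
  fun z => Cdiv (Csub (f z) (f z2)) (Csub z z2).

(* Main.v *)
Require Import Defs.
From Coquelicot Require Import Coquelicot.
From Stdlib Require Import Reals Lra Lia ClassicalEpsilon Classical.
Open Scope R_scope.
Notation CC := Complex.C.

Lemma Cmod_sub_sym (a b : CC) : Cmod (a - b) = Cmod (b - a).
Proof. replace (a - b)%C with (- (b - a))%C by ring. apply Cmod_opp. Qed.

Lemma Cmod_tri3 (a b c : CC) : Cmod (a - c) <= Cmod (a - b) + Cmod (b - c).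
Proof. replace (a - c)%C with ((a - b) + (b - c))%C by ring. apply Cmod_triangle. Qed.

Lemma Cmod_rev_tri (a b : CC) : Cmod a - Cmod b <= Cmod (a - b).
Proof. pose proof (Cmod_tri3 a b 0). replace (a - 0)%C with a in H by ring.
 replace (b - 0)%C with b in H by ring. lra. Qed.

Lemma Cmult_neq0 (a b : CC) : a <> 0%C -> b <> 0%C -> (a * b)%C <> 0%C.
Proof. intros Ha Hb. apply Cmod_gt_0. rewrite Cmod_mult. apply Rmult_lt_0_compat; apply Cmod_gt_0; auto. Qed.

Definition clim {X : Type} (P : X -> Prop) (d : X -> R) (F : X -> CC) (L : CC) :=
  forall eps, eps > 0 -> exists delta, delta > 0 /\
   forall x, P x -> d x < delta -> Cmod (F x - L) < eps.

Section Lim.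
Context {X : Type} (P : X -> Prop) (d : X -> R).

Lemma lim_const c : clim P d (fun _ => c) c.
Proof. intros e He. exists 1. split. lra. intros. replace (c - c)%C with (0:CC) by ring.
 rewrite Cmod_0. lra. Qed.

Lemma lim_ext F G L : (forall x, P x -> F x = G x) -> clim P d F L -> clim P d G L.
Proof. intros HE HF e He. destruct (HF e He) as [dl [Hd H]]. exists dl. split; auto.
 intros. rewrite <- HE; auto. Qed.

Lemma lim_ext_loc F G L r : r > 0 -> (forall x, P x -> d x < r -> F x = G x) ->
  clim P d F L -> clim P d G L.
Proof. intros Hr HE HF e He. destruct (HF e He) as [dl [Hd H]]. exists (Rmin dl r). split.
 apply Rmin_pos; auto. intros x Px Dx. pose proof (Rmin_l dl r). pose proof (Rmin_r dl r).
 rewrite <- HE; auto; try lra. apply H; auto; lra. Qed.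

Lemma lim_plus F G L M : clim P d F L -> clim P d G M -> clim P d (fun x => F x + G x)%C (L + M)%C.
Proof. intros HF HG e He. destruct (HF (e/2)) as [d1 [Hd1 H1]]. lra.
 destruct (HG (e/2)) as [d2 [Hd2 H2]]. lra. exists (Rmin d1 d2). split. apply Rmin_pos; auto.
 intros x Px Dx. pose proof (Rmin_l d1 d2). pose proof (Rmin_r d1 d2).
 replace (F x + G x - (L + M))%C with ((F x - L) + (G x - M))%C by ring.
 eapply Rle_lt_trans. apply Cmod_triangle. specialize (H1 x Px). specialize (H2 x Px). 
 assert (Cmod (F x - L) < e/2) by (apply H1; lra).
 assert (Cmod (G x - M) < e/2) by (apply H2; lra). lra. Qed.

Lemma lim_scal c F L : clim P d F L -> clim P d (fun x => c * F x)%C (c * L)%C.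
Proof. intros HF e He. destruct (HF (e / (Cmod c + 1))) as [d1 [Hd1 H1]].
 apply Rdiv_lt_0_compat; auto. pose proof (Cmod_ge_0 c); lra.
 exists d1. split; auto. intros x Px Dx.
 replace (c * F x - c * L)%C with (c * (F x - L))%C by ring. rewrite Cmod_mult.
 specialize (H1 x Px Dx). pose proof (Cmod_ge_0 c). pose proof (Cmod_ge_0 (F x - L)).
 apply Rle_lt_trans with (Cmod c * (e / (Cmod c + 1))).
 apply Rmult_le_compat_l; lra.
 apply Rlt_le_trans with ((Cmod c + 1) * (e / (Cmod c + 1))). apply Rmult_lt_compat_r.
 apply Rdiv_lt_0_compat; lra. lra. right. field. lra. Qed.

Lemma lim_opp F L : clim P d F L -> clim P d (fun x => - F x)%C (- L)%C.
Proof. intros H. apply lim_ext with (fun x => (-1) * F x)%C. intros; ring.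
 replace (- L)%C with ((-1) * L)%C by ring. apply lim_scal; auto. Qed.

Lemma lim_minus F G L M : clim P d F L -> clim P d G M -> clim P d (fun x => F x - G x)%C (L - M)%C.
Proof. intros. apply lim_plus; auto. apply lim_opp; auto. Qed.

Lemma lim_mult F G L M : clim P d F L -> clim P d G M -> clim P d (fun x => F x * G x)%C (L * M)%C.
Proof. intros HF HG e He. pose proof (Cmod_ge_0 L). pose proof (Cmod_ge_0 M).
 set (eta := Rmin 1 (e / (2 * (1 + Cmod L + Cmod M)))).
 assert (Heta : eta > 0). unfold eta. apply Rmin_pos. lra. apply Rdiv_lt_0_compat; lra.
 assert (Heta1 : eta <= 1) by apply Rmin_l.
 assert (Heta2 : eta * (1 + Cmod L + Cmod M) < e).
 { apply Rle_lt_trans with (e / (2 * (1 + Cmod L + Cmod M)) * (1 + Cmod L + Cmod M)).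
   apply Rmult_le_compat_r. lra. apply Rmin_r. replace (e / (2 * (1 + Cmod L + Cmod M)) * (1 + Cmod L + Cmod M)) with (e/2). lra. field. lra. }
 destruct (HF eta Heta) as [d1 [Hd1 H1]]. destruct (HG eta Heta) as [d2 [Hd2 H2]].
 exists (Rmin d1 d2). split. apply Rmin_pos; auto.
 intros x Px Dx. pose proof (Rmin_l d1 d2). pose proof (Rmin_r d1 d2).
 assert (A1 : Cmod (F x - L) < eta) by (apply H1; auto; lra).
 assert (A2 : Cmod (G x - M) < eta) by (apply H2; auto; lra).
 replace (F x * G x - L * M)%C with ((F x - L) * (G x - M) + L * (G x - M) + (F x - L) * M)%C by ring.
 eapply Rle_lt_trans. apply Cmod_triangle. 
 pose proof (Cmod_triangle ((F x - L) * (G x - M)) (L * (G x - M))).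
 rewrite !Cmod_mult in *. pose proof (Cmod_ge_0 (F x - L)). pose proof (Cmod_ge_0 (G x - M)).
 assert (Cmod (F x - L) * Cmod (G x - M) <= eta * 1).
 { apply Rmult_le_compat; lra. }
 assert (Cmod L * Cmod (G x - M) <= Cmod L * eta) by (apply Rmult_le_compat_l; lra).
 assert (Cmod (F x - L) * Cmod M <= eta * Cmod M) by (apply Rmult_le_compat_r; lra).
 nra. Qed.

Lemma lim_inv (G : X -> CC) (M : CC) : M <> 0%C -> clim P d G M -> clim P d (fun x => / G x)%C (/ M)%C.
Proof. intros HM HG e He. pose proof (proj1 (Cmod_gt_0 M) HM) as Mp.
 set (eta := Rmin (Cmod M / 2) (e * (Cmod M * Cmod M) / 2)).
 assert (Heta : eta > 0). unfold eta. apply Rmin_pos. lra.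
 apply Rdiv_lt_0_compat; [|lra]. apply Rmult_lt_0_compat; auto. apply Rmult_lt_0_compat; auto.
 destruct (HG eta Heta) as [d1 [Hd1 H1]]. exists d1. split; auto. intros x Px Dx.
 specialize (H1 x Px Dx). assert (eta <= Cmod M / 2) by apply Rmin_l.
 assert (eta <= e * (Cmod M * Cmod M) / 2) by apply Rmin_r.
 assert (Gp : Cmod (G x) > Cmod M / 2).
 { pose proof (Cmod_rev_tri M (M - G x)). replace (M - (M - G x))%C with (G x) in H2 by ring.
   rewrite Cmod_sub_sym in H1. lra. }
 assert (G0 : G x <> 0%C). { intro E. rewrite E, Cmod_0 in Gp. lra. }
 replace (/ G x - / M)%C with ((M - G x) / (G x * M))%C by (field; auto).
 rewrite Cmod_div, Cmod_mult. 2: { apply Cmult_neq0; auto. }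
 apply Rlt_le_trans with (eta / (Cmod M / 2 * Cmod M)).
 - unfold Rdiv. apply Rle_lt_trans with (Cmod (M - G x) * / (Cmod M / 2 * Cmod M)).
   apply Rmult_le_compat_l. apply Cmod_ge_0. apply Rinv_le_contravar. nra.
   apply Rmult_le_compat_r; lra. apply Rmult_lt_compat_r.
   apply Rinv_0_lt_compat; nra. rewrite Cmod_sub_sym; lra.
 - apply Rle_trans with ((e * (Cmod M * Cmod M) / 2) / (Cmod M / 2 * Cmod M)).
   unfold Rdiv. apply Rmult_le_compat_r. left; apply Rinv_0_lt_compat; nra. lra.
   right. field. lra. Qed.

End Lim.

Lemma lim_comp {X Y : Type} (P : X -> Prop) (d : X -> R) (Q : Y -> Prop) (e : Y -> R)
  (psi : Y -> X) F L :
  clim P d F L -> (forall y, Q y -> P (psi y)) ->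
  (forall eta, eta > 0 -> exists delta, delta > 0 /\ forall y, Q y -> e y < delta -> d (psi y) < eta) ->
  clim Q e (fun y => F (psi y)) L.
Proof. intros HF HQ HC ep Hep. destruct (HF ep Hep) as [d1 [Hd1 H1]].
 destruct (HC d1 Hd1) as [d2 [Hd2 H2]]. exists d2. split; [auto|]. intros y Qy Ey.
 apply H1; auto. Qed.

Lemma lim_weaken {X : Type} (P P' : X -> Prop) d F L : (forall x, P' x -> P x) -> clim P d F L -> clim P' d F L.
Proof. intros HP HF e He. destruct (HF e He) as [dl [Hd H]]. exists dl. split; auto. Qed.

Lemma lim_unique {X : Type} (P : X -> Prop) d F L1 L2 :
  (forall delta, delta > 0 -> exists x, P x /\ d x < delta) ->
  clim P d F L1 -> clim P d F L2 -> L1 = L2.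
Proof. intros Hacc H1 H2. destruct (Ceq_dec L1 L2) as [E|N]; auto. exfalso.
 pose proof (proj1 (Cmod_gt_0 (L1 - L2)%C)) as HP. assert (L1 - L2 <> 0)%C.
 { intro E. apply N. replace L1 with ((L1 - L2) + L2)%C by ring. rewrite E; ring. }
 specialize (HP H). set (e := Cmod (L1 - L2) / 2).
 destruct (H1 e) as [d1 [Hd1 A1]]. unfold e; lra. destruct (H2 e) as [d2 [Hd2 A2]]. unfold e; lra.
 destruct (Hacc (Rmin d1 d2)) as [x [Px Dx]]. apply Rmin_pos; auto.
 pose proof (Rmin_l d1 d2). pose proof (Rmin_r d1 d2).
 specialize (A1 x Px ltac:(lra)). specialize (A2 x Px ltac:(lra)).
 pose proof (Cmod_tri3 L1 (F x) L2). rewrite Cmod_sub_sym in A1. unfold e in *. lra. Qed.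

Section Isd.
Variable G : CC -> Prop.

Definition PG (z1 : CC) := fun z => G z /\ z <> z1.
Definition dC (z1 : CC) := fun z : CC => Cmod (z - z1).
Definition isd (g : CC -> CC) (z1 : CC) (L : CC) :=
  clim (PG z1) (dC z1) (fun z => (g z - g z1) / (z - z1))%C L.

Lemma arc_deriv_isd g g1 z1 : arc_deriv G g g1 z1 <-> isd g z1 (g1 z1).
Proof. unfold isd, clim, PG, dC; split; intros H e He; destruct (H e He) as [dl [Hd H']]; exists dl; split; [auto| |auto|].
 - intros z [Gz Nz] Dz. apply H'; auto.
 - intros z Gz Nz Dz. apply (H' z); try split; auto. Qed.

Lemma lim_id z1 : clim (PG z1) (dC z1) (fun z => z) z1.
Proof. intros e He. exists e. split; auto. Qed.

Lemma sub_neq0 (a b : CC) : a <> b -> (a - b)%C <> 0%C.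
Proof. intros N E. apply N. replace a with ((a - b) + b)%C by ring. rewrite E; ring. Qed.

Lemma isd_cont g z1 L : isd g z1 L -> clim (PG z1) (dC z1) g (g z1).
Proof. intros H. apply lim_ext with (fun z => g z1 + (g z - g z1) / (z - z1) * (z - z1))%C.
 intros z [Gz Nz]. field. apply sub_neq0; auto.
 pose proof (lim_plus _ _ _ _ _ _ (lim_const (PG z1) (dC z1) (g z1))
   (lim_mult _ _ _ _ _ _ H (lim_minus _ _ _ _ _ _ (lim_id z1) (lim_const (PG z1) (dC z1) z1)))) as K.
 replace (g z1 + L * (z1 - z1))%C with (g z1) in K by ring. exact K. Qed.

Lemma isd_const c z1 : isd (fun _ => c) z1 0%C.
Proof. unfold isd. apply lim_ext with (fun _ => 0%C). intros z [Gz Nz]. field. apply sub_neq0; auto.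
 apply lim_const. Qed.

Lemma isd_id z1 : isd (fun z => z) z1 1%C.
Proof. unfold isd. apply lim_ext with (fun _ => 1%C). intros z [Gz Nz]. field. apply sub_neq0; auto.
 apply lim_const. Qed.

Lemma isd_plus g h z1 L M : isd g z1 L -> isd h z1 M -> isd (fun z => g z + h z)%C z1 (L + M)%C.
Proof. intros. unfold isd. apply lim_ext with (fun z => (g z - g z1) / (z - z1) + (h z - h z1) / (z - z1))%C.
 intros z [Gz Nz]. field. apply sub_neq0; auto. apply lim_plus; auto. Qed.

Lemma isd_minus g h z1 L M : isd g z1 L -> isd h z1 M -> isd (fun z => g z - h z)%C z1 (L - M)%C.
Proof. intros. unfold isd. apply lim_ext with (fun z => (g z - g z1) / (z - z1) - (h z - h z1) / (z - z1))%C.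
 intros z [Gz Nz]. field. apply sub_neq0; auto. apply lim_minus; auto. Qed.

Lemma isd_mult g h z1 L M : isd g z1 L -> isd h z1 M -> isd (fun z => g z * h z)%C z1 (L * h z1 + g z1 * M)%C.
Proof. intros Hg Hh. unfold isd.
 apply lim_ext with (fun z => (g z - g z1) / (z - z1) * h z + g z1 * ((h z - h z1) / (z - z1)))%C.
 intros z [Gz Nz]. field. apply sub_neq0; auto. apply lim_plus. apply lim_mult; auto.
 eapply isd_cont; eauto. apply lim_scal; auto. Qed.

Lemma isd_scal c g z1 L : isd g z1 L -> isd (fun z => c * g z)%C z1 (c * L)%C.
Proof. intros H. replace (c * L)%C with (0 * g z1 + c * L)%C by ring.
 apply isd_mult; auto. apply isd_const. Qed.

Lemma isd_ext g h z1 L r : r > 0 -> (forall z, G z -> Cmod (z - z1) < r -> g z = h z) -> g z1 = h z1 ->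
  isd g z1 L -> isd h z1 L.
Proof. intros Hr HE H1 Hg. unfold isd. apply lim_ext_loc with (fun z => (g z - g z1) / (z - z1))%C r; auto.
 intros z [Gz Nz] Dz. rewrite HE, H1; auto. Qed.

Lemma isd_inv g z1 L : isd g z1 L -> g z1 <> 0%C -> isd (fun z => / g z)%C z1 (- L / (g z1 * g z1))%C.
Proof. intros Hg N. pose proof (isd_cont _ _ _ Hg) as Hc.
 pose proof (proj1 (Cmod_gt_0 _) N) as Np.
 destruct (Hc (Cmod (g z1))) as [r [Hr Hr']]; auto.
 unfold isd. apply lim_ext_loc with (fun z => - ((g z - g z1) / (z - z1)) * / (g z * g z1))%C r; auto.
 intros z [Gz Nz] Dz. specialize (Hr' z (conj Gz Nz) Dz).
 assert (g z <> 0%C). { intro E. rewrite E in Hr'. replace (0 - g z1)%C with (- g z1)%C in Hr' by ring.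
   rewrite Cmod_opp in Hr'. lra. }
 field. repeat split; auto. apply sub_neq0; auto.
 replace (- L / (g z1 * g z1))%C with (- L * / (g z1 * g z1))%C by reflexivity.
 apply lim_mult. apply lim_opp; auto. apply lim_inv. apply Cmult_neq0; auto.
 apply lim_mult; auto. apply lim_const. Qed.

Lemma isd_pow g z1 L n : isd g z1 L -> isd (fun z => Cpow (g z) (S n)) z1 (RtoC (INR (S n)) * Cpow (g z1) n * L)%C.
Proof. intros H. induction n.
 - simpl. apply lim_ext with (fun z => (g z - g z1) / (z - z1))%C. intros z [Gz Nz]. simpl. field. apply sub_neq0; auto.
   replace (1 * 1 * L)%C with L. exact H. simpl; ring.
 - replace (RtoC (INR (S (S n))) * Cpow (g z1) (S n) * L)%C with
    (L * Cpow (g z1) (S n) + g z1 * (RtoC (INR (S n)) * Cpow (g z1) n * L))%C.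
   apply (isd_mult g (fun z => Cpow (g z) (S n))); auto.
   rewrite (S_INR (S n)). rewrite RtoC_plus. simpl Cpow. ring. Qed.

End Isd.

Lemma endpoint_est (h h' : R -> R) e t s eps :
  s <> t -> Rabs (e - t) <= Rabs (s - t) -> Rabs (s - e) <= Rabs (s - t) ->
  (t <> e -> Rabs ((h e - h t) / (e - t) - h' t) < eps / 2) -> Rabs (h' e - h' t) < eps / 2 ->
  Rabs (((h e + (s - e) * h' e) - h t) / (s - t) - h' t) < eps.
Proof. intros Hst Ha Hb HQ HD.
 assert (Hst' : s - t <> 0) by lra.
 destruct (Req_dec t e) as [E|N].
 - subst e. replace ((h t + (s - t) * h' t - h t) / (s - t) - h' t) with 0 by (field; auto).
   rewrite Rabs_R0. pose proof (Rabs_pos (h' t - h' t)). lra.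
 - specialize (HQ N). set (Q := (h e - h t) / (e - t) - h' t) in *.
   assert (He : h e - h t = (e - t) * (Q + h' t)). { unfold Q. field. lra. }
   replace ((h e + (s - e) * h' e - h t) / (s - t) - h' t) with
     ((e - t) / (s - t) * Q + (s - e) / (s - t) * (h' e - h' t)).
   2: { replace (h e + (s - e) * h' e - h t) with ((h e - h t) + (s - e) * h' e) by ring.
        rewrite He. field. auto. }
   eapply Rle_lt_trans. apply Rabs_triang. rewrite !Rabs_mult.
   assert (A1 : Rabs ((e - t) / (s - t)) <= 1).
   { unfold Rdiv. rewrite Rabs_mult, Rabs_inv. apply Rmult_le_reg_r with (Rabs (s - t)).
     apply Rabs_pos_lt; auto. rewrite Rmult_assoc, Rinv_l. lra. apply Rabs_no_R0; auto. }
   assert (A2 : Rabs ((s - e) / (s - t)) <= 1).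
   { unfold Rdiv. rewrite Rabs_mult, Rabs_inv. apply Rmult_le_reg_r with (Rabs (s - t)).
     apply Rabs_pos_lt; auto. rewrite Rmult_assoc, Rinv_l. lra. apply Rabs_no_R0; auto. }
   pose proof (Rabs_pos ((e - t) / (s - t))). pose proof (Rabs_pos ((s - e) / (s - t))).
   pose proof (Rabs_pos Q). pose proof (Rabs_pos (h' e - h' t)).
   assert (Rabs ((e - t) / (s - t)) * Rabs Q <= Rabs Q) by nra.
   assert (Rabs ((s - e) / (s - t)) * Rabs (h' e - h' t) <= Rabs (h' e - h' t)) by nra.
   lra. Qed.

Definition cl (t : R) := Rmax 0 (Rmin 1 t).
Lemma cl_id t : 0 <= t <= 1 -> cl t = t.
Proof. intros. unfold cl. rewrite Rmin_right by lra. rewrite Rmax_right; lra. Qed.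
Lemma cl_in t : 0 <= cl t <= 1.
Proof. unfold cl. split. apply Rmax_l. apply Rmax_lub. lra. apply Rmin_l. Qed.
Lemma cl_lip s t : Rabs (cl s - cl t) <= Rabs (s - t).
Proof. unfold cl. destruct (Rle_dec s 0); destruct (Rle_dec t 0); destruct (Rle_dec s 1); destruct (Rle_dec t 1);
 repeat (first [rewrite (Rmin_right 1 s) by lra | rewrite (Rmin_left 1 s) by lra
   | rewrite (Rmin_right 1 t) by lra | rewrite (Rmin_left 1 t) by lra]);
 repeat (first [rewrite (Rmax_left 0 s) by lra | rewrite (Rmax_right 0 s) by lra
   | rewrite (Rmax_left 0 t) by lra | rewrite (Rmax_right 0 t) by lra
   | rewrite (Rmax_right 0 1) by lra]);
 unfold Rabs; repeat destruct Rcase_abs; lra. Qed.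

Lemma ftc_real (h h' : R -> R) :
 (forall t, 0 <= t <= 1 -> forall eps, eps > 0 -> exists delta, delta > 0 /\
    forall s, 0 <= s <= 1 -> s <> t -> Rabs (s - t) < delta -> Rabs ((h s - h t) / (s - t) - h' t) < eps) ->
 (forall t, 0 <= t <= 1 -> forall eps, eps > 0 -> exists delta, delta > 0 /\
    forall s, 0 <= s <= 1 -> Rabs (s - t) < delta -> Rabs (h' s - h' t) < eps) ->
 forall a b, 0 <= a <= 1 -> 0 <= b <= 1 -> is_RInt h' a b (h b - h a).
Proof. intros Hd Hc a b Ha Hb.
 set (he := fun t => h (cl t) + (t - cl t) * h' (cl t)).
 assert (Hcont : forall t, continuity_pt (fun t => h' (cl t)) t).
 { intros t e He. destruct (Hc (cl t) (cl_in t) e He) as [dl [Hdl H]].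
   exists dl. split; auto. intros x [_ Dx]. simpl in *. unfold R_dist in *.
   apply H. apply cl_in. eapply Rle_lt_trans. apply cl_lip. auto. }
 assert (Hder : forall t, derivable_pt_lim he t (h' (cl t))).
 { intros t e He.
   destruct (Rlt_dec t 0) as [Tn|Tn].
   - assert (dp : 0 < - t) by lra. exists (mkposreal _ dp). intros hh Hh Hl. simpl in Hl.
     assert (t + hh < 0). { unfold Rabs in Hl; destruct Rcase_abs; lra. }
     unfold he, cl. rewrite !Rmin_right by lra. rewrite !Rmax_left by lra.
     replace ((h 0 + (t + hh - 0) * h' 0 - (h 0 + (t - 0) * h' 0)) / hh - h' 0) with 0 by (field; auto).
     rewrite Rabs_R0; lra.
   - destruct (Rlt_dec 1 t) as [Tp|Tp].
     + assert (dp : 0 < t - 1) by lra. exists (mkposreal _ dp). intros hh Hh Hl. simpl in Hl.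
       assert (t + hh > 1). { unfold Rabs in Hl; destruct Rcase_abs; lra. }
       unfold he, cl. rewrite !Rmin_left by lra. rewrite !Rmax_right by lra.
       replace ((h 1 + (t + hh - 1) * h' 1 - (h 1 + (t - 1) * h' 1)) / hh - h' 1) with 0 by (field; auto).
       rewrite Rabs_R0; lra.
     + assert (Ht : 0 <= t <= 1) by lra.
       destruct (Hd t Ht (e/2)) as [d1 [Hd1 H1]]. lra.
       destruct (Hc t Ht (e/2)) as [d2 [Hd2 H2]]. lra.
       assert (dp : 0 < Rmin d1 d2) by (apply Rmin_pos; auto).
       exists (mkposreal _ dp). intros hh Hh Hl. simpl in Hl.
       pose proof (Rmin_l d1 d2). pose proof (Rmin_r d1 d2).
       unfold he. rewrite (cl_id t Ht). replace (t - t) with 0 by ring. rewrite Rmult_0_l, Rplus_0_r.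
       set (s := t + hh). replace hh with (s - t) by (unfold s; ring).
       assert (Hst : s <> t) by (unfold s; lra).
       assert (Hsl : Rabs (s - t) < Rmin d1 d2) by (unfold s; replace (t + hh - t) with hh by ring; auto).
       destruct (Rle_dec 0 s); destruct (Rle_dec s 1).
       * rewrite (cl_id s) by lra. replace (s - s) with 0 by ring. rewrite Rmult_0_l, Rplus_0_r.
         apply Rlt_trans with (e/2). apply H1; auto; lra. lra.
       * assert (cl s = 1). { unfold cl. rewrite Rmin_left by lra. rewrite Rmax_right; lra. }
         rewrite H3. apply endpoint_est; auto.
         unfold Rabs; repeat destruct Rcase_abs; lra. unfold Rabs; repeat destruct Rcase_abs; lra.
         intros. apply H1; try lra. unfold Rabs in *; repeat destruct Rcase_abs; lra.
         apply H2; try lra. unfold Rabs in *; repeat destruct Rcase_abs; lra.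
       * assert (cl s = 0). { unfold cl. rewrite Rmin_right by lra. rewrite Rmax_left; lra. }
         rewrite H3. apply endpoint_est; auto.
         unfold Rabs; repeat destruct Rcase_abs; lra. unfold Rabs; repeat destruct Rcase_abs; lra.
         intros. apply H1; try lra. unfold Rabs in *; repeat destruct Rcase_abs; lra.
         apply H2; try lra. unfold Rabs in *; repeat destruct Rcase_abs; lra.
       * lra. }
 assert (HI : is_RInt (fun t => h' (cl t)) a b (minus (he b) (he a))).
 { apply (is_RInt_derive (V:=R_CompleteNormedModule) he (fun t => h' (cl t))). intros x _. apply is_derive_Reals. apply Hder.
   intros x _. apply continuity_pt_filterlim. apply Hcont. }
 replace (h b - h a) with (minus (he b) (he a)).
 2: { unfold he. rewrite (cl_id a), (cl_id b) by auto. unfold minus, plus, opp; simpl. ring. }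
 apply is_RInt_ext with (fun t => h' (cl t)); auto.
 intros x Hx. rewrite cl_id; auto. split.
 - apply Rle_trans with (Rmin a b). apply Rmin_glb; lra. lra.
 - apply Rle_trans with (Rmax a b). lra. apply Rmax_lub; lra. Qed.

Definition Pt (t : R) := fun s => 0 <= s <= 1 /\ s <> t.
Definition Pa := fun s : R => 0 <= s <= 1.
Definition dt (t : R) := fun s : R => Rabs (s - t).
Definition pdq (H : R -> CC) (t : R) := fun s => ((H s - H t) / RtoC (s - t))%C.
Definition pd (H H' : R -> CC) := forall t, 0 <= t <= 1 -> clim (Pt t) (dt t) (pdq H t) (H' t).
Definition c01 (H : R -> CC) := forall t, 0 <= t <= 1 -> clim Pa (dt t) H (H t).

Lemma param_deriv_pd H H' : param_deriv H H' -> pd H H'.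
Proof. intros P t Ht e He. destruct (P t Ht e He) as [d [Hd Hd']]. exists d. split; auto.
 intros s [Hs Ns] Ds. apply Hd'; auto. Qed.

Lemma cont_on01_c01 H : cont_on01 H -> c01 H.
Proof. intros P t Ht e He. destruct (P t Ht e He) as [d [Hd Hd']]. exists d. split; auto. Qed.

Lemma RtoC_neq0 r : r <> 0 -> RtoC r <> 0%C.
Proof. intros N E. apply N. injection E. auto. Qed.

Lemma pd_c01 H H' : pd H H' -> c01 H.
Proof. intros P t Ht e He. destruct (P t Ht 1) as [d [Hd Hd']]. lra.
 pose proof (Cmod_ge_0 (H' t)).
 exists (Rmin d (e / (Cmod (H' t) + 1))). split. apply Rmin_pos; auto. apply Rdiv_lt_0_compat; lra.
 intros s Hs Ds. unfold dt in Ds. pose proof (Rmin_l d (e / (Cmod (H' t) + 1))).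
 pose proof (Rmin_r d (e / (Cmod (H' t) + 1))).
 destruct (Req_dec s t) as [E|N].
 - subst. replace (H t - H t)%C with (RtoC 0) by ring. rewrite Cmod_0; lra.
 - assert (Dst : dt t s < d) by (unfold dt in *; lra). assert (Pts : Pt t s) by (split; [exact Hs | exact N]). specialize (Hd' s Pts Dst). unfold pdq in Hd'.
   replace (H s - H t)%C with ((H s - H t) / RtoC (s - t) * RtoC (s - t))%C.
   2: { field. apply RtoC_neq0. lra. }
   rewrite Cmod_mult, Cmod_R.
   pose proof (Cmod_tri3 ((H s - H t) / RtoC (s - t))%C (H' t) (RtoC 0)) as T.
   replace ((H s - H t) / RtoC (s - t) - RtoC 0)%C with ((H s - H t) / RtoC (s - t))%C in T by ring.
   replace (H' t - RtoC 0)%C with (H' t) in T by ring.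
   pose proof (Cmod_ge_0 ((H s - H t) / RtoC (s - t))%C). pose proof (Rabs_pos (s - t)).
   apply Rle_lt_trans with ((Cmod (H' t) + 1) * Rabs (s - t)).
   apply Rmult_le_compat_r; lra.
   apply Rlt_le_trans with ((Cmod (H' t) + 1) * (e / (Cmod (H' t) + 1))).
   apply Rmult_lt_compat_l; lra. right; field; lra. Qed.

Lemma fst_pdq (H : R -> CC) t s (L : CC) : s <> t ->
  fst (pdq H t s - L)%C = (fst (H s) - fst (H t)) / (s - t) - fst L.
Proof. intros N. unfold pdq. simpl. field. lra. Qed.
Lemma snd_pdq (H : R -> CC) t s (L : CC) : s <> t ->
  snd (pdq H t s - L)%C = (snd (H s) - snd (H t)) / (s - t) - snd L.
Proof. intros N. unfold pdq. simpl. field. lra. Qed.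

Lemma fst_le (z : CC) : Rabs (fst z) <= Cmod z.
Proof. pose proof (Rmax_Cmod z). pose proof (Rmax_l (Rabs (fst z)) (Rabs (snd z))). lra. Qed.
Lemma snd_le (z : CC) : Rabs (snd z) <= Cmod z.
Proof. pose proof (Rmax_Cmod z). pose proof (Rmax_r (Rabs (fst z)) (Rabs (snd z))). lra. Qed.

Lemma ftc_C (H H' : R -> CC) : pd H H' -> c01 H' -> forall a b, 0 <= a <= 1 -> 0 <= b <= 1 ->
  is_RInt (fun t => fst (H' t)) a b (fst (H b) - fst (H a)) /\
  is_RInt (fun t => snd (H' t)) a b (snd (H b) - snd (H a)).
Proof. intros P C a b Ha Hb. split; [apply (ftc_real (fun t => fst (H t))) | apply (ftc_real (fun t => snd (H t)))]; auto.
 - intros t Ht e He. destruct (P t Ht e He) as [d [Hd Hd']]. exists d. split; auto. intros s Hs Ns Ds.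
   rewrite <- fst_pdq; auto. eapply Rle_lt_trans. apply fst_le. apply Hd'; [unfold Pt; split; auto | exact Ds].
 - intros t Ht e He. destruct (C t Ht e He) as [d [Hd Hd']]. exists d. split; auto. intros s Hs Ds.
   eapply Rle_lt_trans. 2: apply (Hd' s Hs Ds). replace (fst (H' s) - fst (H' t)) with (fst (H' s - H' t)%C).
   apply fst_le. simpl; ring.
 - intros t Ht e He. destruct (P t Ht e He) as [d [Hd Hd']]. exists d. split; auto. intros s Hs Ns Ds.
   rewrite <- snd_pdq; auto. eapply Rle_lt_trans. apply snd_le. apply Hd'; [unfold Pt; split; auto | exact Ds].
 - intros t Ht e He. destruct (C t Ht e He) as [d [Hd Hd']]. exists d. split; auto. intros s Hs Ds.
   eapply Rle_lt_trans. 2: apply (Hd' s Hs Ds). replace (snd (H' s) - snd (H' t)) with (snd (H' s - H' t)%C).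
   apply snd_le. simpl; ring. Qed.

Section Arc.
Variables (phi dphi : R -> CC).
Hypothesis Pphi : pd phi dphi.
Hypothesis Iphi : forall s t, 0 <= s <= 1 -> 0 <= t <= 1 -> phi s = phi t -> s = t.
Definition A := on_arc phi.

Lemma phi_c01 : c01 phi.
Proof. apply (pd_c01 _ _ Pphi). Qed.

Lemma arc_acc z1 : A z1 -> forall delta, delta > 0 -> exists z, PG A z1 z /\ dC z1 z < delta.
Proof. intros [t [Ht E]] delta Hdel. subst z1. destruct (phi_c01 t Ht delta Hdel) as [d [Hd Hd']].
 set (eta := Rmin (1/2) (d/2)). assert (eta > 0) by (apply Rmin_pos; lra).
 assert (eta <= 1/2) by apply Rmin_l. assert (eta <= d/2) by apply Rmin_r.
 set (s := if Rle_dec t (1/2) then t + eta else t - eta).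
 assert (Hs : 0 <= s <= 1) by (unfold s; destruct Rle_dec; lra).
 assert (Ns : s <> t) by (unfold s; destruct Rle_dec; lra).
 assert (Ds : Rabs (s - t) < d) by (unfold s; destruct Rle_dec; unfold Rabs; destruct Rcase_abs; lra).
 exists (phi s). split. split. exists s; split; auto. intro E. apply Ns. apply Iphi; auto.
 unfold dC. apply (Hd' s Hs Ds). Qed.

Lemma isd_unique g z1 L1 L2 : A z1 -> isd A g z1 L1 -> isd A g z1 L2 -> L1 = L2.
Proof. intros Az H1 H2. eapply lim_unique; eauto. intros. apply arc_acc; auto. Qed.

Lemma chain g t L : 0 <= t <= 1 -> isd A g (phi t) L ->
  clim (Pt t) (dt t) (pdq (fun s => g (phi s)) t) (L * dphi t)%C.
Proof. intros Ht Hg.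
 apply lim_ext with (fun s => (g (phi s) - g (phi t)) / (phi s - phi t) * pdq phi t s)%C.
 { intros s [Hs Ns]. unfold pdq. field. split. apply RtoC_neq0; lra. apply sub_neq0.
   intro E. apply Ns. apply Iphi; auto. }
 apply lim_mult. 2: apply Pphi; auto.
 apply (lim_comp (PG A (phi t)) (dC (phi t)) (Pt t) (dt t) phi (fun z => (g z - g (phi t)) / (z - phi t))%C).
 exact Hg. intros s [Hs Ns]. split. exists s; split; auto. intro E. apply Ns. apply Iphi; auto.
 intros eta He. destruct (phi_c01 t Ht eta He) as [d [Hd Hd']]. exists d. split; auto.
 intros s [Hs Ns] Ds. apply Hd'; auto. Qed.

Lemma arc_cont_c01 g : (forall z1, A z1 -> clim A (dC z1) g (g z1)) -> c01 (fun s => g (phi s)).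
Proof. intros Hg t Ht. apply (lim_comp A (dC (phi t)) Pa (dt t) phi g). apply Hg. exists t; auto.
 intros s Hs. exists s; auto. intros eta He. destruct (phi_c01 t Ht eta He) as [d [Hd Hd']].
 exists d. split; auto. Qed.

Lemma isd_arc_cont g z1 L : isd A g z1 L -> clim A (dC z1) g (g z1).
Proof. intros H e He. destruct (isd_cont A g z1 L H e He) as [d [Hd Hd']]. exists d. split; auto.
 intros z Az Dz. destruct (Ceq_dec z z1) as [E|N]. subst. replace (g z1 - g z1)%C with (RtoC 0) by ring.
 rewrite Cmod_0; lra. apply Hd'; auto. split; auto. Qed.

End Arc.

Lemma Cmod_le_sum (z : CC) : Cmod z <= Rabs (fst z) + Rabs (snd z).
Proof. unfold Cmod. rewrite <- (sqrt_Rsqr (Rabs (fst z) + Rabs (snd z))).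
 2: { pose proof (Rabs_pos (fst z)). pose proof (Rabs_pos (snd z)). lra. }
 apply sqrt_le_1_alt. unfold Rsqr. pose proof (Rabs_pos (fst z)). pose proof (Rabs_pos (snd z)).
 assert (fst z ^ 2 = Rabs (fst z) * Rabs (fst z)). { rewrite <- Rabs_mult. simpl. rewrite Rmult_1_r. rewrite Rabs_right; auto. apply Rle_ge. apply Rle_0_sqr. }
 assert (snd z ^ 2 = Rabs (snd z) * Rabs (snd z)). { rewrite <- Rabs_mult. simpl. rewrite Rmult_1_r. rewrite Rabs_right; auto. apply Rle_ge. apply Rle_0_sqr. }
 nra. Qed.

Lemma Cmod_abs_diff (a b : CC) : Rabs (Cmod a - Cmod b) <= Cmod (a - b).
Proof. pose proof (Cmod_rev_tri a b). pose proof (Cmod_rev_tri b a). rewrite Cmod_sub_sym in H0.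
 unfold Rabs; destruct Rcase_abs; lra. Qed.

Lemma c01_bounded g : c01 g -> exists M, forall t, 0 <= t <= 1 -> Cmod (g t) <= M.
Proof. intros Hg. destruct (continuity_ab_maj (fun t => Cmod (g (cl t))) 0 1) as [Mx [HM HMx]]. lra.
 - intros c _ e He. destruct (Hg (cl c) (cl_in c) e He) as [d [Hd Hd']]. exists d. split; auto.
   intros x [_ Dx]. simpl in *. unfold R_dist in *. eapply Rle_lt_trans. apply Cmod_abs_diff.
   apply Hd'. apply cl_in. unfold dt. eapply Rle_lt_trans. apply cl_lip. auto.
 - exists (Cmod (g (cl Mx))). intros t Ht. rewrite <- (cl_id t Ht). apply HM; auto. Qed.

Lemma int_bound (u : R -> R) a b I M : is_RInt u a b I ->
  (forall t, Rmin a b <= t <= Rmax a b -> Rabs (u t) <= M) -> Rabs I <= M * Rabs (b - a).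
Proof. intros HI HB. destruct (Rle_dec a b) as [Hab|Hab].
 - rewrite Rmin_left, Rmax_right in HB by auto. rewrite <- (is_RInt_unique _ _ _ _ HI).
   rewrite (Rabs_right (b - a)) by lra. rewrite Rmult_comm. apply abs_RInt_le_const; auto.
   exists I; auto.
 - rewrite Rmin_right, Rmax_left in HB by lra. apply (is_RInt_swap (V:=R_NormedModule)) in HI.
   pose proof (is_RInt_unique _ _ _ _ HI) as E.
   replace (Rabs I) with (Rabs (RInt u b a)) by (rewrite E; unfold opp; simpl; apply Rabs_Ropp).
   rewrite (Rabs_left (b - a)) by lra. replace (- (b - a)) with (a - b) by ring.
   rewrite Rmult_comm. apply abs_RInt_le_const; try lra. exists (opp I); auto. intros; apply HB; lra. Qed.

Section Chord.
Variables (phi dphi : R -> CC).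
Hypothesis Pphi : pd phi dphi.
Hypothesis Cdphi : c01 dphi.
Hypothesis Nphi : forall t, 0 <= t <= 1 -> dphi t <> (0,0).
Hypothesis Iphi : forall s t, 0 <= s <= 1 -> 0 <= t <= 1 -> phi s = phi t -> s = t.

Lemma Rmin_Rmax_in a b t : 0 <= a <= 1 -> 0 <= b <= 1 -> Rmin a b <= t <= Rmax a b -> 0 <= t <= 1.
Proof. intros. pose proof (Rmin_glb a b 0). pose proof (Rmax_lub a b 1). lra. Qed.

Lemma lin_err x y (c : CC) eps : 0 <= x <= 1 -> 0 <= y <= 1 ->
  (forall w, Rmin y x <= w <= Rmax y x -> Cmod (dphi w - c) <= eps) ->
  Cmod (phi x - phi y - c * RtoC (x - y)) <= 2 * eps * Rabs (x - y).
Proof. intros Hx Hy HB. destruct (ftc_C phi dphi Pphi Cdphi y x Hy Hx) as [F1 F2].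
 assert (G1 : is_RInt (fun t => fst (dphi t) - fst c) y x ((fst (phi x) - fst (phi y)) - (x - y) * fst c)).
 { apply (is_RInt_minus (V:=R_NormedModule) _ (fun _ => fst c)); auto.
   replace ((x - y) * fst c) with (scal (x - y) (fst c)) by reflexivity. apply (is_RInt_const (V:=R_NormedModule)). }
 assert (G2 : is_RInt (fun t => snd (dphi t) - snd c) y x ((snd (phi x) - snd (phi y)) - (x - y) * snd c)).
 { apply (is_RInt_minus (V:=R_NormedModule) _ (fun _ => snd c)); auto.
   replace ((x - y) * snd c) with (scal (x - y) (snd c)) by reflexivity. apply (is_RInt_const (V:=R_NormedModule)). }
 apply int_bound with (M := eps) in G1. apply int_bound with (M := eps) in G2.
 2,3: intros t Ht; eapply Rle_trans; [|apply (HB t Ht)].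
 2: replace (snd (dphi t) - snd c) with (snd (dphi t - c)%C) by (simpl; ring); apply snd_le.
 2: replace (fst (dphi t) - fst c) with (fst (dphi t - c)%C) by (simpl; ring); apply fst_le.
 eapply Rle_trans. apply Cmod_le_sum.
 replace (fst (phi x - phi y - c * RtoC (x - y))%C) with ((fst (phi x) - fst (phi y)) - (x - y) * fst c) by (simpl; ring).
 replace (snd (phi x - phi y - c * RtoC (x - y))%C) with ((snd (phi x) - snd (phi y)) - (x - y) * snd c) by (simpl; ring).
 lra. Qed.

Lemma phi_lip : exists L, L > 0 /\ forall s t, 0 <= s <= 1 -> 0 <= t <= 1 -> Cmod (phi s - phi t) <= L * Rabs (s - t).
Proof. destruct (c01_bounded dphi Cdphi) as [M HM].
 exists (2 * (Rabs M + 1)). split. pose proof (Rabs_pos M); lra. intros s t Hs Ht.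
 pose proof (lin_err s t (RtoC 0) (Rabs M + 1) Hs Ht) as E.
 replace (phi s - phi t - RtoC 0 * RtoC (s - t))%C with (phi s - phi t)%C in E by ring.
 apply E. intros w Hw. replace (dphi w - RtoC 0)%C with (dphi w) by ring.
 pose proof (HM w (Rmin_Rmax_in t s w Ht Hs Hw)). pose proof (Rle_abs M). lra. Qed.

Lemma local_lower u v : 0 <= u <= 1 -> 0 <= v <= 1 -> exists r, r > 0 /\
  forall x y, 0 <= x <= 1 -> 0 <= y <= 1 -> Rabs (x - u) < r -> Rabs (y - v) < r ->
  r * Rabs (x - y) <= Cmod (phi x - phi y).
Proof. intros Hu Hv. pose proof (phi_c01 phi dphi Pphi) as Cphi.
 destruct (Req_dec u v) as [E|N].
 - subst v. set (m := Cmod (dphi u)).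
   assert (Hm : m > 0). { apply Cmod_gt_0. apply Nphi; auto. }
   destruct (Cdphi u Hu (m/4)) as [d [Hd Hd']]. lra.
   exists (Rmin d (m/2)). split. apply Rmin_pos; lra. intros x y Hx Hy Dx Dy.
   pose proof (Rmin_l d (m/2)). pose proof (Rmin_r d (m/2)).
   pose proof (lin_err x y (dphi u) (m/4) Hx Hy) as E.
   assert (E' : Cmod (phi x - phi y - dphi u * RtoC (x - y)) <= 2 * (m / 4) * Rabs (x - y)).
   { apply E. intros w Hw. left. apply Hd'. apply (Rmin_Rmax_in y x w Hy Hx Hw).
     unfold dt. destruct (Rle_dec y x).
     rewrite Rmin_left, Rmax_right in Hw by lra. unfold Rabs in *; repeat destruct Rcase_abs; lra.
     rewrite Rmin_right, Rmax_left in Hw by lra. unfold Rabs in *; repeat destruct Rcase_abs; lra. }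
   pose proof (Cmod_rev_tri (dphi u * RtoC (x - y)) (dphi u * RtoC (x - y) - (phi x - phi y))).
   replace (dphi u * RtoC (x - y) - (dphi u * RtoC (x - y) - (phi x - phi y)))%C with (phi x - phi y)%C in H1 by ring.
   rewrite Cmod_sub_sym in E'. 
   rewrite Cmod_mult, Cmod_R in H1. fold m in H1.
   pose proof (Rabs_pos (x - y)).
   assert (Rmin d (m/2) * Rabs (x - y) <= m / 2 * Rabs (x - y)) by (apply Rmult_le_compat_r; lra).
   lra.
 - set (p := Cmod (phi u - phi v)).
   assert (Hp : p > 0). { apply Cmod_gt_0. apply sub_neq0. intro E. apply N. apply Iphi; auto. }
   destruct (Cphi u Hu (p/4)) as [d1 [Hd1 H1]]. lra.
   destruct (Cphi v Hv (p/4)) as [d2 [Hd2 H2]]. lra.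
   exists (Rmin (Rmin d1 d2) (p/2)). split. apply Rmin_pos. apply Rmin_pos; auto. lra.
   intros x y Hx Hy Dx Dy.
   pose proof (Rmin_l (Rmin d1 d2) (p/2)). pose proof (Rmin_r (Rmin d1 d2) (p/2)).
   pose proof (Rmin_l d1 d2). pose proof (Rmin_r d1 d2).
   specialize (H1 x Hx ltac:(unfold dt; lra)). specialize (H2 y Hy ltac:(unfold dt; lra)).
   pose proof (Cmod_tri3 (phi u) (phi x) (phi v)) as T1. pose proof (Cmod_tri3 (phi x) (phi y) (phi v)) as T2.
   unfold dt in H1, H2. rewrite Cmod_sub_sym in H1. fold p in T1.
   assert (Rabs (x - y) <= 1) by (unfold Rabs; destruct Rcase_abs; lra).
   pose proof (Rabs_pos (x - y)).
   assert (Rmin (Rmin d1 d2) (p / 2) * Rabs (x - y) <= p / 2 * 1).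
   { assert (Rmin (Rmin d1 d2) (p / 2) > 0) by (apply Rmin_pos; [apply Rmin_pos|]; lra). apply Rmult_le_compat; lra. }
   lra. Qed.

Lemma chord_lower : exists c, c > 0 /\ forall x y, 0 <= x <= 1 -> 0 <= y <= 1 ->
  c * Rabs (x - y) <= Cmod (phi x - phi y).
Proof.
 assert (Hex : forall p : R * R, exists r, r > 0 /\ (0 <= fst p <= 1 -> 0 <= snd p <= 1 ->
   forall x y, 0 <= x <= 1 -> 0 <= y <= 1 -> Rabs (x - fst p) < r -> Rabs (y - snd p) < r ->
   r * Rabs (x - y) <= Cmod (phi x - phi y))).
 { intros [u v]. simpl. destruct (Rle_dec 0 u); destruct (Rle_dec u 1); destruct (Rle_dec 0 v); destruct (Rle_dec v 1);
   try (exists 1; split; [lra| intros; lra]).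
   destruct (local_lower u v) as [rr [Hr Hr']]; try lra. exists rr; split; auto. }
 set (rf := fun p => proj1_sig (constructive_indefinite_description _ (Hex p))).
 assert (Hrf : forall p, rf p > 0 /\ (0 <= fst p <= 1 -> 0 <= snd p <= 1 ->
   forall x y, 0 <= x <= 1 -> 0 <= y <= 1 -> Rabs (x - fst p) < rf p -> Rabs (y - snd p) < rf p ->
   rf p * Rabs (x - y) <= Cmod (phi x - phi y))).
 { intros p. unfold rf. destruct (constructive_indefinite_description _ (Hex p)). simpl. auto. }
 set (delta := fun u v => mkposreal (rf (u, v)) (proj1 (Hrf (u, v)))).
 destruct (compactness_value_2d 0 1 0 1 delta) as [d Hd].
 exists d. split. apply cond_pos. intros x y Hx Hy.
 apply Rnot_lt_le. intro Hlt. apply (Hd x y Hx Hy). intros [u [v [Hu [Hv [Dx [Dy Dd]]]]]].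
 simpl in Dx, Dy, Dd. destruct (Hrf (u, v)) as [_ Hb]. simpl in Hb.
 specialize (Hb Hu Hv x y Hx Hy Dx Dy).
 assert (d * Rabs (x - y) <= rf (u, v) * Rabs (x - y)) by (apply Rmult_le_compat_r; [apply Rabs_pos | auto]).
 lra. Qed.

End Chord.

Definition sg (m : nat) : CC := RtoC ((-1) ^ m).
Definition fc (m : nat) : CC := RtoC (INR (Factorial.fact m)).
Definition nc (m : nat) : CC := RtoC (INR m).

Lemma sg_S m : sg (S m) = (- sg m)%C.
Proof. unfold sg. simpl. apply injective_projections; simpl; ring. Qed.
Lemma sg_sq m : (sg m * sg m)%C = 1%C.
Proof. induction m. unfold sg; simpl. apply injective_projections; simpl; ring.
 rewrite sg_S. replace (- sg m * - sg m)%C with (sg m * sg m)%C by ring. auto. Qed.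
Lemma fc_S m : fc (S m) = (nc (S m) * fc m)%C.
Proof. unfold fc, nc. rewrite fact_simpl, mult_INR. apply injective_projections; simpl; ring. Qed.
Lemma fc_neq0 m : fc m <> 0%C.
Proof. apply RtoC_neq0. apply INR_fact_neq_0. Qed.
Lemma nc_S_neq0 m : nc (S m) <> 0%C.
Proof. apply RtoC_neq0. apply not_0_INR. lia. Qed.
Lemma Cpow_neq0 (u : CC) m : u <> 0%C -> Cpow u m <> 0%C.
Proof. intros H. apply Cmod_gt_0. rewrite Cmod_pow. apply pow_lt. apply Cmod_gt_0; auto. Qed.
Lemma Cpow_inv (u : CC) m : u <> 0%C -> Cpow (/ u) m = (/ Cpow u m)%C.
Proof. intros H. induction m. simpl. field. simpl. rewrite IHm. field. split; auto. apply Cpow_neq0; auto. Qed.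
Lemma Cpow_swap (a b : CC) m : Cpow (a - b) m = (sg m * Cpow (b - a) m)%C.
Proof. induction m. unfold sg; simpl. apply injective_projections; simpl; ring.
 simpl Cpow. rewrite IHm, sg_S. ring. Qed.
Lemma Cpow_eq z n : Defs.Cpow z n = Cpow z n.
Proof. induction n; simpl; [reflexivity| rewrite IHn; reflexivity]. Qed.

Lemma isd_eqv G g z L L' : isd G g z L -> L = L' -> isd G g z L'.
Proof. intros; subst; auto. Qed.
Lemma isd_eqf G g h z L : (forall w, g w = h w) -> isd G h z L -> isd G g z L.
Proof. intros E H. unfold isd. apply lim_ext with (fun w => (h w - h z) / (w - z))%C; auto.
 intros. rewrite !E; auto. Qed.

Section Main.
Variables (phi dphi : R -> CC) (f : CC -> CC) (Df : nat -> CC -> CC) (n : nat).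
Hypothesis Pphi : pd phi dphi.
Hypothesis Cdphi : c01 dphi.
Hypothesis Iphi : forall s t, 0 <= s <= 1 -> 0 <= t <= 1 -> phi s = phi t -> s = t.
Hypothesis HD0 : forall z, A phi z -> Df 0%nat z = f z.
Hypothesis HDs : forall j, (j < S n)%nat -> forall z, A phi z -> isd (A phi) (Df j) z (Df (S j) z).

Fixpoint B (z2 : CC) (j : nat) (z : CC) : CC :=
  match j with
  | O => (f z2 - Df 0%nat z)%C
  | S j' => (B z2 j' z - Df (S j') z * Cpow (z2 - z) (S j') / fc (S j'))%C
  end.

Definition E (z2 : CC) (j : nat) (z : CC) : CC :=
  (- fc j * sg j * Cpow (/ (z - z2)) (S j) * B z2 j z)%C.

Lemma B_deriv z2 j z : (j <= n)%nat -> A phi z ->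
  isd (A phi) (B z2 j) z (- Df (S j) z * Cpow (z2 - z) j / fc j)%C.
Proof. intros Hj Az. induction j.
 - apply isd_eqf with (fun w => f z2 - Df 0%nat w)%C. intros; reflexivity.
   eapply isd_eqv. apply isd_minus. apply isd_const. apply HDs; auto; lia.
   unfold fc; simpl. apply injective_projections; simpl; field.
 - apply isd_eqf with (fun w => B z2 j w - Df (S j) w * (/ fc (S j) * Cpow (z2 - w) (S j)))%C.
   intros w. change (B z2 (S j) w) with (B z2 j w - Df (S j) w * Cpow (z2 - w) (S j) / fc (S j))%C. field. apply fc_neq0.
   eapply isd_eqv. apply isd_minus. apply IHj; lia. apply isd_mult. apply HDs; auto; lia.
   apply isd_scal. apply (isd_pow (A phi) (fun w => z2 - w)%C z (0 - 1)%C j).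
   apply isd_minus. apply isd_const. apply isd_id.
   rewrite fc_S. simpl Cpow. change (RtoC (INR (S j))) with (nc (S j)). field. split. apply fc_neq0. apply nc_S_neq0. Qed.

Lemma E_deriv z2 j z : (j <= n)%nat -> A phi z -> z <> z2 ->
  isd (A phi) (E z2 j) z (E z2 (S j) z).
Proof. intros Hj Az Nz. assert (U : (z - z2)%C <> 0%C) by (apply sub_neq0; auto).
 unfold E at 1.
 apply isd_eqf with (fun w => (- fc j * sg j) * (Cpow (/ (w - z2)) (S j) * B z2 j w))%C.
 intros; ring.
 eapply isd_eqv. apply isd_scal. apply isd_mult. 
 apply (isd_pow (A phi) (fun w => / (w - z2))%C z (- (1 - 0) / ((z - z2) * (z - z2)))%C j).
 apply (isd_inv (A phi) (fun w => w - z2)%C). apply isd_minus. apply isd_id. apply isd_const. auto.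
 apply B_deriv; auto.
 unfold E. simpl B. rewrite fc_S, sg_S. simpl Cpow.
 replace (z2 - z)%C with (- (z - z2))%C by ring.
 change (RtoC (INR (S j))) with (nc (S j)). field. repeat split; auto. apply fc_neq0. apply nc_S_neq0. Qed.

Lemma E0_divdiff z2 z : A phi z -> A phi z2 -> z <> z2 -> E z2 0 z = divdiff f z2 z.
Proof. intros Az Az2 N. unfold E, divdiff. simpl B. rewrite HD0; auto. unfold fc, sg. simpl.
 replace (Defs.Cdiv (Csub (f z) (f z2)) (Csub z z2)) with ((f z - f z2) / (z - z2))%C by reflexivity.
 field. apply sub_neq0; auto. Qed.

Lemma B_z2 z2 j : A phi z2 -> B z2 j z2 = 0%C.
Proof. intros Az. induction j; simpl B. rewrite HD0; auto. ring. rewrite IHj. simpl Cpow. field. apply fc_neq0. Qed.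

End Main.

Lemma c01_mult g h : c01 g -> c01 h -> c01 (fun t => g t * h t)%C.
Proof. intros Hg Hh t Ht. apply lim_mult; auto. Qed.
Lemma c01_minus g h : c01 g -> c01 h -> c01 (fun t => g t - h t)%C.
Proof. intros Hg Hh t Ht. apply lim_minus; auto. Qed.
Lemma c01_const c : c01 (fun _ => c).
Proof. intros t Ht. apply lim_const. Qed.
Lemma c01_pow g m : c01 g -> c01 (fun t => Cpow (g t) m).
Proof. intros Hg. induction m. simpl. apply c01_const. simpl. apply c01_mult; auto. Qed.
Lemma c01_ext g h : (forall t, g t = h t) -> c01 g -> c01 h.
Proof. intros E H t Ht. apply lim_ext with g. intros; auto. rewrite <- E. auto. Qed.

Lemma fst_RtoC_mult a (w : CC) : fst (RtoC a * w)%C = a * fst w.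
Proof. simpl. ring. Qed.
Lemma snd_RtoC_mult a (w : CC) : snd (RtoC a * w)%C = a * snd w.
Proof. simpl. ring. Qed.
Lemma RtoC_div x y : y <> 0 -> RtoC (x / y) = (RtoC x / RtoC y)%C.
Proof. intros. apply injective_projections; simpl; field; auto. Qed.

Section Main2.
Variables (phi dphi : R -> CC) (f : CC -> CC) (Df : nat -> CC -> CC) (n : nat).
Hypothesis Pphi : pd phi dphi.
Hypothesis Cdphi : c01 dphi.
Hypothesis Nphi : forall t, 0 <= t <= 1 -> dphi t <> (0,0).
Hypothesis Iphi : forall s t, 0 <= s <= 1 -> 0 <= t <= 1 -> phi s = phi t -> s = t.
Hypothesis HD0 : forall z, A phi z -> Df 0%nat z = f z.
Hypothesis HDs : forall j, (j < S n)%nat -> forall z, A phi z -> isd (A phi) (Df j) z (Df (S j) z).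
Hypothesis Hcn : forall z1, A phi z1 -> clim (A phi) (dC z1) (Df (S n)) (Df (S n) z1).

Lemma Dcont j : (j <= S n)%nat -> c01 (fun t => Df j (phi t)).
Proof. intros Hj. apply (arc_cont_c01 phi dphi Pphi). intros z1 Az.
 destruct (Nat.eq_dec j (S n)). subst; auto.
 apply (isd_arc_cont phi) with (Df (S j) z1). apply HDs; auto; lia. Qed.

Variable k : nat.
Hypothesis Hk : (S k <= n)%nat.

Definition Jf (z2 : CC) (t : R) : CC :=
  Cmul (Cmul (Defs.Cpow (Csub (phi t) z2) (S k)) (Df (S (S k)) (phi t))) (dphi t).

Definition Kf (z2 : CC) (t : R) : CC := B f Df z2 (S k) (phi t).
Definition aK : R := (-1) ^ k / INR (Factorial.fact (S k)).

Lemma aK_neq0 : aK <> 0.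
Proof. unfold aK. apply Rmult_integral_contrapositive. split. apply pow_nonzero. lra.
 apply Rinv_neq_0_compat. apply INR_fact_neq_0. Qed.

Lemma Jf_eq z2 t : Jf z2 t = (Cpow (phi t - z2) (S k) * Df (S (S k)) (phi t) * dphi t)%C.
Proof. unfold Jf. rewrite Cpow_eq. reflexivity. Qed.

Lemma aK_eq : RtoC aK = (sg k / fc (S k))%C.
Proof. unfold aK. rewrite RtoC_div. reflexivity. apply INR_fact_neq_0. Qed.

Lemma Kf_pd z2 : pd (Kf z2) (fun t => RtoC aK * Jf z2 t)%C.
Proof. intros t Ht.
 assert (Az : A phi (phi t)) by (exists t; auto).
 pose proof (chain phi dphi Pphi Iphi (B f Df z2 (S k)) t _ Ht (B_deriv phi f Df n HDs z2 (S k) (phi t) Hk Az)) as HC.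
 replace (RtoC aK * Jf z2 t)%C with
   (- Df (S (S k)) (phi t) * Cpow (z2 - phi t) (S k) / fc (S k) * dphi t)%C. exact HC.
 rewrite Jf_eq, aK_eq, (Cpow_swap z2 (phi t)), sg_S. field. apply fc_neq0. Qed.

Lemma Jf_c01 z2 : c01 (Jf z2).
Proof. apply c01_ext with (fun t => Cpow (phi t - z2) (S k) * Df (S (S k)) (phi t) * dphi t)%C.
 intros; rewrite Jf_eq; auto.
 apply c01_mult; auto. apply c01_mult. apply c01_pow. apply c01_minus. apply (phi_c01 phi dphi Pphi).
 apply c01_const. apply Dcont. lia. Qed.

Lemma Jf_int z2 t1 t2 : 0 <= t1 <= 1 -> 0 <= t2 <= 1 -> A phi z2 -> phi t2 = z2 ->
  is_RInt (fun t => fst (Jf z2 t)) t2 t1 (/ aK * fst (Kf z2 t1)) /\ is_RInt (fun t => snd (Jf z2 t)) t2 t1 (/ aK * snd (Kf z2 t1)).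
Proof. intros H1 H2 Az E.
 assert (K0 : Kf z2 t2 = 0%C). { unfold Kf. rewrite E. apply (B_z2 phi f Df HD0); auto. }
 assert (Hc : c01 (fun t => RtoC aK * Jf z2 t)%C). { apply c01_mult. apply c01_const. apply Jf_c01. }
 destruct (ftc_C _ _ (Kf_pd z2) Hc t2 t1 H2 H1) as [F1 F2]. rewrite K0 in F1, F2. simpl in F1, F2.
 pose proof aK_neq0. split.
 - apply (is_RInt_scal (V:=R_NormedModule) _ _ _ (/ aK)) in F1.
   eapply is_RInt_ext. 2: { replace (/ aK * fst (Kf z2 t1)) with (scal (/ aK) (fst (Kf z2 t1) - 0)). exact F1.
     unfold scal; simpl. unfold mult; simpl. ring. }
   intros x _. unfold scal; simpl. unfold mult; simpl. field. auto.
 - apply (is_RInt_scal (V:=R_NormedModule) _ _ _ (/ aK)) in F2.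
   eapply is_RInt_ext. 2: { replace (/ aK * snd (Kf z2 t1)) with (scal (/ aK) (snd (Kf z2 t1) - 0)). exact F2.
     unfold scal; simpl. unfold mult; simpl. ring. }
   intros x _. unfold scal; simpl. unfold mult; simpl. field. auto. Qed.


Definition gint (z2 : CC) := fun z => Cmul (Defs.Cpow (Csub z z2) (S k)) (Df (S (S k)) z).

Lemma v_value z2 z1 v : arc_integral phi dphi (gint z2) z2 z1 v ->
  (RtoC aK * v)%C = B f Df z2 (S k) z1.
Proof. intros [t1 [t2 [H1 [H2 [E1 [E2 [pr1 [pr2 Ev]]]]]]]].
 assert (Az2 : A phi z2) by (exists t2; auto).
 destruct (Jf_int z2 t1 t2 H1 H2 Az2 E2) as [F1 F2].
 pose proof (RInt_Reals _ _ _ pr1) as R1. pose proof (RInt_Reals _ _ _ pr2) as R2.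
 change (fun t => fst (Jf z2 t)) with (fun t => fst (Cmul (gint z2 (phi t)) (dphi t))) in F1.
 change (fun t => snd (Jf z2 t)) with (fun t => snd (Cmul (gint z2 (phi t)) (dphi t))) in F2.
 rewrite (is_RInt_unique _ _ _ _ F1) in R1. rewrite (is_RInt_unique _ _ _ _ F2) in R2.
 subst v. rewrite <- R1, <- R2. unfold Kf. rewrite E1. pose proof aK_neq0.
 apply injective_projections; simpl; field; split; auto; exact (INR_fact_neq_0 (S k)). Qed.

Lemma v_exists z2 z1 : A phi z1 -> A phi z2 -> exists v, arc_integral phi dphi (gint z2) z2 z1 v.
Proof. intros [t1 [H1 E1]] [t2 [H2 E2]].
 destruct (Jf_int z2 t1 t2 H1 H2 (ex_intro _ t2 (conj H2 E2)) E2) as [F1 F2].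
 assert (pr1 : Riemann_integrable (fun t => fst (Cmul (gint z2 (phi t)) (dphi t))) t2 t1).
 { apply ex_RInt_Reals_0. exists (/ aK * fst (Kf z2 t1)). exact F1. }
 assert (pr2 : Riemann_integrable (fun t => snd (Cmul (gint z2 (phi t)) (dphi t))) t2 t1).
 { apply ex_RInt_Reals_0. exists (/ aK * snd (Kf z2 t1)). exact F2. }
 exists (RiemannInt pr1, RiemannInt pr2). exists t1, t2. repeat split; auto; try lra.
 exists pr1, pr2. reflexivity. Qed.

Lemma key_identity z2 z1 v : A phi z1 -> A phi z2 -> z1 <> z2 ->
  arc_integral phi dphi (gint z2) z2 z1 v ->
  (nc (S k) * E f Df z2 k z1)%C = (Df (S k) z1 - v / Cpow (z1 - z2) (S k))%C.
Proof. intros Az1 Az2 N Hv. pose proof (v_value _ _ _ Hv) as Vv.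
 assert (U : (z1 - z2)%C <> 0%C) by (apply sub_neq0; auto).
 unfold E. change (B f Df z2 (S k) z1) with (B f Df z2 k z1 - Df (S k) z1 * Cpow (z2 - z1) (S k) / fc (S k))%C in Vv.
 assert (Bk : B f Df z2 k z1 = (RtoC aK * v + Df (S k) z1 * Cpow (z2 - z1) (S k) / fc (S k))%C).
 { rewrite Vv. field. apply fc_neq0. }
 rewrite Bk. rewrite Cpow_inv by auto. rewrite (Cpow_swap z2 z1), sg_S, aK_eq, fc_S.
 transitivity (sg k * sg k * (Df (S k) z1 - v / Cpow (z1 - z2) (S k)))%C.
 field. repeat split. apply Cpow_neq0; auto. apply fc_neq0. apply nc_S_neq0.
 rewrite sg_sq. ring. Qed.


Lemma S2_bound : exists Bd, forall z1 z2 v, z1 <> z2 ->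
  arc_integral phi dphi (gint z2) z2 z1 v -> Cmod (v / Cpow (z1 - z2) (S k)) <= Bd.
Proof.
 destruct (phi_lip phi dphi Pphi Cdphi) as [L [HL HL']].
 destruct (chord_lower phi dphi Pphi Cdphi Nphi Iphi) as [c [Hc Hc']].
 destruct (c01_bounded _ (Dcont (S (S k)) ltac:(lia))) as [M2 HM2].
 destruct (c01_bounded _ Cdphi) as [M3 HM3].
 set (m2 := Rabs M2). set (m3 := Rabs M3).
 assert (m2 >= 0) by (unfold m2; apply Rle_ge, Rabs_pos). assert (m3 >= 0) by (unfold m3; apply Rle_ge, Rabs_pos).
 exists (2 * (L ^ (S k) * m2 * m3) / c ^ (S k)).
 intros z1 z2 v N [t1 [t2 [H1 [H2 [E1 [E2 [pr1 [pr2 Ev]]]]]]]].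
 subst v. set (d := Rabs (t1 - t2)).
 assert (Ht : t1 <> t2). { intro E. apply N. rewrite <- E1, <- E2, E. auto. }
 assert (Hd : d > 0) by (unfold d; apply Rabs_pos_lt; lra).
 assert (Hd1 : d <= 1) by (unfold d; unfold Rabs; destruct Rcase_abs; lra).
 set (Q := (L * d) ^ (S k) * m2 * m3).
 assert (HQ : Q >= 0). { unfold Q. apply Rle_ge. apply Rmult_le_pos. apply Rmult_le_pos. apply pow_le. nra. lra. lra. }
 assert (IB : forall t, Rmin t2 t1 <= t <= Rmax t2 t1 -> Cmod (Jf z2 t) <= Q).
 { intros t Ht'. pose proof (Rmin_Rmax_in t2 t1 t H2 H1 Ht') as Hin.
   rewrite Jf_eq. rewrite !Cmod_mult, Cmod_pow. unfold Q.
   assert (Cmod (phi t - z2) <= L * d).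
   { rewrite <- E2. eapply Rle_trans. apply HL'; auto. apply Rmult_le_compat_l. lra.
     unfold d. destruct (Rle_dec t2 t1).
     rewrite Rmin_left, Rmax_right in Ht' by lra. unfold Rabs; repeat destruct Rcase_abs; lra.
     rewrite Rmin_right, Rmax_left in Ht' by lra. unfold Rabs; repeat destruct Rcase_abs; lra. }
   assert (Cmod (phi t - z2) ^ S k <= (L * d) ^ S k). { apply pow_incr. split; auto. apply Cmod_ge_0. }
   assert (Cmod (Df (S (S k)) (phi t)) <= m2). { eapply Rle_trans. apply HM2; auto. apply Rle_abs. }
   assert (Cmod (dphi t) <= m3). { eapply Rle_trans. apply HM3; auto. apply Rle_abs. }
   pose proof (Cmod_ge_0 (Df (S (S k)) (phi t))). pose proof (Cmod_ge_0 (dphi t)).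
   pose proof (pow_le (Cmod (phi t - z2)) (S k) (Cmod_ge_0 _)).
   apply Rmult_le_compat; try lra. apply Rmult_le_pos; auto. apply Rmult_le_compat; try lra. }
 assert (I1 : Rabs (RiemannInt pr1) <= Q * d).
 { rewrite <- RInt_Reals. unfold d. apply (int_bound (fun t => fst (Cmul (gint z2 (phi t)) (dphi t))) t2 t1).
   apply (RInt_correct (V:=R_CompleteNormedModule)). apply ex_RInt_Reals_1. auto.
   intros t Ht'. eapply Rle_trans. apply fst_le. apply (IB t Ht'). }
 assert (I2 : Rabs (RiemannInt pr2) <= Q * d).
 { rewrite <- RInt_Reals. unfold d. apply (int_bound (fun t => snd (Cmul (gint z2 (phi t)) (dphi t))) t2 t1).
   apply (RInt_correct (V:=R_CompleteNormedModule)). apply ex_RInt_Reals_1. auto.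
   intros t Ht'. eapply Rle_trans. apply snd_le. apply (IB t Ht'). }
 assert (Cv : Cmod (RiemannInt pr1, RiemannInt pr2) <= 2 * Q * d).
 { pose proof (Cmod_le_sum (RiemannInt pr1, RiemannInt pr2)) as T. cbn [fst snd] in T. lra. }
 assert (U : (z1 - z2)%C <> 0%C) by (apply sub_neq0; auto).
 assert (CU : (c * d) ^ S k <= Cmod (Cpow (z1 - z2) (S k))).
 { rewrite Cmod_pow. apply pow_incr. split. nra. rewrite <- E1, <- E2. apply Hc'; auto. }
 assert (CUp : (c * d) ^ S k > 0). { apply pow_lt. nra. }
 rewrite Cmod_div by (apply Cpow_neq0; auto).
 apply Rle_trans with (2 * Q * d / (c * d) ^ S k).
 { unfold Rdiv. apply Rmult_le_compat. apply Cmod_ge_0. left; apply Rinv_0_lt_compat.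
   apply Rlt_le_trans with ((c * d) ^ S k); auto. auto. apply Rinv_le_contravar; auto. }
 unfold Q. rewrite !Rpow_mult_distr.
 assert (c ^ S k > 0) by (apply pow_lt; lra). assert (d ^ S k > 0) by (apply pow_lt; lra).
 assert (L ^ S k > 0) by (apply pow_lt; lra).
 replace (2 * (L ^ S k * d ^ S k * m2 * m3) * d / (c ^ S k * d ^ S k)) with
   (2 * (L ^ S k * m2 * m3) / c ^ S k * d) by (field; lra).
 assert (0 <= 2 * (L ^ S k * m2 * m3) / c ^ S k).
 { apply Rmult_le_pos. apply Rmult_le_pos. lra. apply Rmult_le_pos. apply Rmult_le_pos; lra. lra.
   left. apply Rinv_0_lt_compat. auto. }
 nra. Qed.

End Main2.

Theorem lemma4 (n : nat) (phi dphi : R -> Cx) (f : Cx -> Cx) (Df : nat -> Cx -> Cx) :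
  (2 <= n)%nat ->
  admissible_param phi dphi ->
  deriv_chain (on_arc phi) (on_arc phi) f Df (S n) ->
  arc_cont (on_arc phi) (Df (S n)) ->
  forall k : nat, (1 <= k <= n - 1)%nat ->
  exists S1 S2 : R,
    is_lub (fun x => exists z, on_arc phi z /\ x = Cnorm (Df (S k) z)) S1 /\
    is_lub (fun x => exists z1 z2 v,
               on_arc phi z1 /\ on_arc phi z2 /\ z1 <> z2 /\
               arc_integral phi dphi
                 (fun z => Cmul (Defs.Cpow (Csub z z2) (S k)) (Df (S (S k)) z)) z2 z1 v /\
               x = Cnorm (Cdiv v (Defs.Cpow (Csub z1 z2) (S k)))) S2 /\
    forall z1 z2, on_arc phi z1 -> on_arc phi z2 -> z1 <> z2 ->
      (exists D, deriv_chain (on_arc phi) (fun z => on_arc phi z /\ z <> z2) (divdiff f z2) D k) /\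
      (forall D, deriv_chain (on_arc phi) (fun z => on_arc phi z /\ z <> z2) (divdiff f z2) D k ->
         Cnorm (D k z1) <= (S1 + S2) / INR (S k)).
Proof.
 intros Hn [Hpd [Hcd [Hnz Hinj]]] [HD0 HDs'] Hcont k Hk.
 pose proof (param_deriv_pd _ _ Hpd) as Pphi.
 pose proof (cont_on01_c01 _ Hcd) as Cdphi.
 assert (HDs : forall j, (j < S n)%nat -> forall z, A phi z -> isd (A phi) (Df j) z (Df (S j) z)).
 { intros j Hj z Az. apply arc_deriv_isd. apply HDs'; auto. }
 assert (Hcn : forall z1, A phi z1 -> clim (A phi) (dC z1) (Df (S n)) (Df (S n) z1)).
 { intros z1 Az e He. destruct (Hcont z1 Az e He) as [d [Hd Hd']]. exists d; split; auto. }
 assert (Hk' : (S k <= n)%nat) by lia.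
 set (E1 := fun x => exists z, on_arc phi z /\ x = Cnorm (Df (S k) z)).
 assert (bE1 : bound E1).
 { destruct (c01_bounded _ (Dcont phi dphi Df n Pphi HDs Hcn (S k) ltac:(lia))) as [M HM].
   exists M. intros x [z [[t [Ht Et]] Ex]]. subst x z. apply HM; auto. }
 assert (nE1 : exists x, E1 x).
 { exists (Cnorm (Df (S k) (phi 0))). exists (phi 0). split; auto. exists 0. split; auto; lra. }
 destruct (completeness E1 bE1 nE1) as [S1 HS1].
 set (E2 := fun x => exists z1 z2 v,
               on_arc phi z1 /\ on_arc phi z2 /\ z1 <> z2 /\
               arc_integral phi dphi
                 (fun z => Cmul (Defs.Cpow (Csub z z2) (S k)) (Df (S (S k)) z)) z2 z1 v /\
               x = Cnorm (Cdiv v (Defs.Cpow (Csub z1 z2) (S k)))).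
 assert (bE2 : bound E2).
 { destruct (S2_bound phi dphi Df n Pphi Cdphi Hnz Hinj HDs Hcn k Hk') as [Bd HB].
   exists Bd. intros x [z1 [z2 [v [_ [_ [N [Hv Ex]]]]]]]. subst x.
   rewrite Cpow_eq. apply (HB z1 z2 v N Hv). }
 assert (nE2 : exists x, E2 x).
 { assert (A1 : A phi (phi 1)) by (exists 1; split; auto; lra).
   assert (A0 : A phi (phi 0)) by (exists 0; split; auto; lra).
   destruct (v_exists phi dphi f Df n Pphi Cdphi Hinj HD0 HDs Hcn k Hk' (phi 0) (phi 1) A1 A0) as [v Hv].
   eexists. exists (phi 1), (phi 0), v. split; [exact A1|]. split; [exact A0|]. split.
   intro E. apply Hinj in E; lra. split; [exact Hv | reflexivity]. }
 destruct (completeness E2 bE2 nE2) as [S2 HS2].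
 exists S1, S2. split; [exact HS1|]. split; [exact HS2|].
 intros z1 z2 Az1 Az2 N.
 split.
 - exists (E f Df z2). split.
   + intros z [Az Nz]. apply E0_divdiff with phi; auto.
   + intros j Hj z [Az Nz]. apply arc_deriv_isd. apply (E_deriv phi f Df n HDs); auto. lia.
 - intros D [D0 DS].
   assert (Eq : forall j, (j <= k)%nat -> forall z, A phi z -> z <> z2 -> D j z = E f Df z2 j z).
   { induction j; intros Hj z Az Nz.
     - rewrite D0 by (split; auto). symmetry. apply E0_divdiff with phi; auto.
     - assert (H1 : isd (A phi) (D j) z (D (S j) z)).
       { apply arc_deriv_isd. apply DS; [lia | split; auto]. }
       assert (H2 : isd (A phi) (E f Df z2 j) z (D (S j) z)).
       { apply isd_ext with (D j) (Cmod (z - z2)).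
         apply Cmod_gt_0. apply sub_neq0; auto.
         intros w Aw Dw. apply IHj; auto. lia. intro E. subst w. rewrite Cmod_sub_sym in Dw. lra.
         apply IHj; auto; lia. auto. }
       eapply isd_unique. exact Pphi. exact Hinj. exact Az. exact H2.
       apply (E_deriv phi f Df n HDs); auto. lia. }
   rewrite (Eq k (le_n k) z1 Az1 N).
   destruct (v_exists phi dphi f Df n Pphi Cdphi Hinj HD0 HDs Hcn k Hk' z2 z1 Az1 Az2) as [v Hv].
   pose proof (key_identity phi dphi f Df n Pphi Cdphi Hinj HD0 HDs Hcn k Hk' z2 z1 v Az1 Az2 N Hv) as KI.
   assert (INp : INR (S k) > 0) by (apply lt_0_INR; lia).
   assert (EE : E f Df z2 k z1 = ((Df (S k) z1 - v / Cpow (z1 - z2) (S k)) / nc (S k))%C).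
   { rewrite <- KI. field. apply nc_S_neq0. }
   change (Cnorm (E f Df z2 k z1)) with (Cmod (E f Df z2 k z1)).
   rewrite EE, Cmod_div by apply nc_S_neq0. unfold nc. rewrite Cmod_R, Rabs_right by lra.
   unfold Rdiv. apply Rmult_le_compat_r. left; apply Rinv_0_lt_compat; lra.
   eapply Rle_trans. replace (Df (S k) z1 - v / Cpow (z1 - z2) (S k))%C with
     (Df (S k) z1 + - (v / Cpow (z1 - z2) (S k)))%C by ring. apply Cmod_triangle.
   rewrite Cmod_opp. apply Rplus_le_compat.
   + apply (proj1 HS1). exists z1. split; auto.
   + apply (proj1 HS2). exists z1, z2, v. split; [auto|]. split; [auto|]. split; [auto|]. split; [exact Hv|]. rewrite <- Cpow_eq. reflexivity.
Qed.
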